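(* Let $|\psi\rangle_{AB}$ and $|\varphi\rangle_{AB}$ be pure states on finite-dimensional registers $A,B$, let $\rho_A=\mathrm{Tr}_B|\psi\rangle\langle\psi|$ and $\sigma_A=\mathrm{Tr}_B|\varphi\rangle\langle\varphi|$, let $\eta\ge 0$, and let $W=\mathrm{sgn}_\eta(\mathrm{Tr}_A(|\varphi\rangle\langle\psi|))$ be the canonical Uhlmann partial isometry with cutoff $\eta$ for $(|\psi\rangle,|\varphi\rangle)$. Then: (1) $W$ is a partial isometry on $B$; (2) $|\langle\varphi|(\mathrm{id}_A\otimes W)|\psi\rangle|^2\ \ge\ \mathrm{F}(\rho_A,\sigma_A)-2\eta\dim(B)$; (3) (minimality) for every partial isometry $R$ on $B$ with $\mathrm{F}(\rho_A,\sigma_A)=|\langle\varphi|(\mathrm{id}_A\otimes R)|\psi\rangle|^2$, we have $W^\dagger W\le R^\dagger R$ in the positive semidefinite order.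
   Context: Fidelity is $\mathrm{F}(\rho,\sigma)=\|\sqrt{\rho}\sqrt{\sigma}\|_1^2$ (squared convention). A linear map $U:A\to B$ is a partial isometry if $U=\tilde U\Pi$ for a projector $\Pi$ on $A$ and an isometry $\tilde U$. For $\eta\ge 0$ and an operator $K$ with singular value decomposition $K=U\Sigma V^\dagger$, define $\mathrm{sgn}_\eta(K)=U\,\mathrm{sgn}_\eta(\Sigma)V^\dagger$, where $\mathrm{sgn}_\eta(\Sigma)$ is the projector onto the span of the eigenvectors of $\Sigma$ with eigenvalue strictly greater than $\eta$. The canonical Uhlmann partial isometry with cutoff $\eta$ for a pair of pure states $(|\psi\rangle_{AB},|\varphi\rangle_{AB})$ is the operator $\mathrm{sgn}_\eta(\mathrm{Tr}_A(|\varphi\rangle\langle\psi|))$ on $B$. *)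

(* Defs.v *)
(* Finite-dimensional quantum states over a numeric closed
   field C (e.g. algC, or complex R for R real closed; C = the complex numbers). *)
From HB Require Import structures.
From mathcomp Require Import all_boot all_order all_algebra.
From mathcomp Require Import mxtens.
Set Implicit Arguments. Unset Strict Implicit. Unset Printing Implicit Defensive.
Import Order.TTheory GRing.Theory Num.Theory Num.Def.
Local Open Scope ring_scope.

Definition adj {C : numClosedFieldType} {m n : nat} (M : 'M[C]_(m, n)) : 'M[C]_(n, m) :=
  map_mx conjC (M ^T).

Definition psdmx {C : numClosedFieldType} {n : nat} (M : 'M[C]_n) : Prop :=
  adj M = M /\ forall v : 'cV[C]_n, 0 <= (adj v *m M *m v) 0 0.

Definition loewner_le {C : numClosedFieldType} {n : nat} (M N : 'M[C]_n) : Prop :=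
  psdmx (N - M).

Definition sqrtmx {C : numClosedFieldType} {n : nat} (M : 'M[C]_n) : 'M[C]_n :=
  invmx (spectralmx M) *m diag_mx (map_mx sqrtC (spectral_diag M))
        *m spectralmx M.

Definition trnorm {C : numClosedFieldType} {n : nat} (K : 'M[C]_n) : C :=
  \tr (sqrtmx (adj K *m K)).

(* Fidelity (squared convention)  F(rho, sigma) = ||sqrt rho sqrt sigma||_1^2. *)
Definition fidelity {C : numClosedFieldType} {n : nat} (rho sigma : 'M[C]_n) : C :=
  (trnorm (sqrtmx rho *m sqrtmx sigma)) ^+ 2.

(* Bipartite system AB with dim A = m, dim B = n; kets are column vectors in
   C^(m*n) = C^m (x) C^n, the basis vector |a>|b> having index mxtens_index (a,b)
   (the Kronecker / tensmx convention). *)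
Definition ptraceB {C : numClosedFieldType} {m n : nat} (M : 'M[C]_(m * n)) : 'M[C]_m :=
  \matrix_(a, a') \sum_(b < n) M (mxtens_index (a, b)) (mxtens_index (a', b)).

Definition ptraceA {C : numClosedFieldType} {m n : nat} (M : 'M[C]_(m * n)) : 'M[C]_n :=
  \matrix_(b, b') \sum_(a < m) M (mxtens_index (a, b)) (mxtens_index (a, b')).

Definition ketbra {C : numClosedFieldType} {k : nat} (phi psi : 'cV[C]_k) : 'M[C]_k :=
  phi *m adj psi.

Definition braket {C : numClosedFieldType} {k : nat} (phi : 'cV[C]_k) (X : 'M[C]_k)
  (psi : 'cV[C]_k) : C := (adj phi *m X *m psi) 0 0.

Definition pure_state {C : numClosedFieldType} {k : nat} (psi : 'cV[C]_k) : Prop :=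
  adj psi *m psi = 1%:M.

Definition projector {C : numClosedFieldType} {n : nat} (P : 'M[C]_n) : Prop :=
  adj P = P /\ P *m P = P.

Definition isometry {C : numClosedFieldType} {m n : nat} (U : 'M[C]_(n, m)) : Prop :=
  adj U *m U = 1%:M.

Definition partial_isometry {C : numClosedFieldType} {m n : nat} (U : 'M[C]_(n, m)) : Prop :=
  exists (Pi : 'M[C]_m) (Ut : 'M[C]_(n, m)), projector Pi /\ isometry Ut /\ U = Ut *m Pi.

Definition is_svd {C : numClosedFieldType} {n : nat} (K U V : 'M[C]_n) (s : 'rV[C]_n) : Prop :=
  U \is unitarymx /\ V \is unitarymx /\ (forall i, 0 <= s 0 i) /\
  K = U *m diag_mx s *m adj V.

Definition sgn_diag {C : numClosedFieldType} {n : nat} (eta : C) (s : 'rV[C]_n) : 'M[C]_n :=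
  diag_mx (\row_i (if eta < s 0 i then 1 else 0)).

Definition sgn_svd {C : numClosedFieldType} {n : nat} (eta : C) (U V : 'M[C]_n)
  (s : 'rV[C]_n) : 'M[C]_n :=
  U *m sgn_diag eta s *m adj V.

(* Main.v *)
Require Import Defs.
From HB Require Import structures.
From mathcomp Require Import all_boot all_order all_algebra.
From mathcomp Require Import mxtens.
From mathcomp Require Import ring.
Set Implicit Arguments. Unset Strict Implicit. Unset Printing Implicit Defensive.
Import Order.TTheory GRing.Theory Num.Theory Num.Def.
Local Open Scope ring_scope.

Section Helpers.
Variable C : numClosedFieldType.

Lemma adjM m n p (A : 'M[C]_(m, n)) (B : 'M[C]_(n, p)) :
  adj (A *m B) = adj B *m adj A.
Proof. by rewrite /adj trmx_mul map_mxM. Qed.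

Lemma adjK m n (A : 'M[C]_(m, n)) : adj (adj A) = A.
Proof. by apply/matrixP => i j; rewrite !mxE conjCK. Qed.

Lemma adjD m n (A B : 'M[C]_(m, n)) : adj (A + B) = adj A + adj B.
Proof. by apply/matrixP => i j; rewrite !mxE rmorphD. Qed.

Lemma adjN m n (A : 'M[C]_(m, n)) : adj (- A) = - adj A.
Proof. by apply/matrixP => i j; rewrite !mxE rmorphN. Qed.

Lemma adjB m n (A B : 'M[C]_(m, n)) : adj (A - B) = adj A - adj B.
Proof. by rewrite adjD adjN. Qed.

Lemma adj0 m n : adj (0 : 'M[C]_(m, n)) = 0.
Proof. by apply/matrixP => i j; rewrite !mxE rmorph0. Qed.

Lemma adj1 n : adj (1%:M : 'M[C]_n) = 1%:M.
Proof. by rewrite /adj trmx1 map_mx1. Qed.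

Lemma adjE m n (A : 'M[C]_(m, n)) i j : adj A i j = (A j i)^*.
Proof. by rewrite !mxE. Qed.

Definition realrow n (s : 'rV[C]_n) := forall i, s 0 i \is Num.real.

Lemma adj_diag n (s : 'rV[C]_n) : realrow s -> adj (diag_mx s) = diag_mx s.
Proof.
move=> sqr; apply/matrixP => i j; rewrite !mxE eq_sym.
case: eqP => [->|_]; last by rewrite !mulr0n rmorph0.
by rewrite !mulr1n; apply/CrealP.
Qed.

Lemma unitary_adjmul n (V : 'M[C]_n) : V \is unitarymx -> V *m adj V = 1%:M.
Proof. by move/unitarymxP. Qed.

Lemma unitary_muladj n (V : 'M[C]_n) : V \is unitarymx -> adj V *m V = 1%:M.
Proof. by move/unitarymxP/mulmx1C. Qed.

Lemma adj_tens m n p q (A : 'M[C]_(m, n)) (B : 'M[C]_(p, q)) :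
  adj (tensmx A B) = tensmx (adj A) (adj B).
Proof.
apply/matrixP => i j.
case: (mxtens_indexP i) => a b; case: (mxtens_indexP j) => c d.
by rewrite adjE !tensmxE !adjE rmorphM.
Qed.

Definition nrm2 p (v : 'cV[C]_p) : C := (adj v *m v) 0 0.

Lemma nrm2E p (v : 'cV[C]_p) : nrm2 v = \sum_i `|v i 0| ^+ 2.
Proof.
rewrite /nrm2 mxE; apply: eq_bigr => i _.
by rewrite adjE normCKC.
Qed.

Lemma nrm2_ge0 p (v : 'cV[C]_p) : 0 <= nrm2 v.
Proof. by rewrite nrm2E sumr_ge0 // => i _; rewrite exprn_ge0. Qed.

Lemma nrm2_eq0 p (v : 'cV[C]_p) : nrm2 v = 0 -> v = 0.
Proof.
rewrite nrm2E => /eqP; rewrite psumr_eq0 => [/allP H|i _]; last by rewrite exprn_ge0.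
apply/matrixP => i j; rewrite ord1 mxE.
have := H i (mem_index_enum i); rewrite /= sqrf_eq0 normr_eq0.
by move/eqP.
Qed.

Lemma mx_adj_eq0 p q (M : 'M[C]_(p, q)) : adj M *m M = 0 -> M = 0.
Proof.
move=> H; apply/matrixP => i j.
have : (adj M *m M) j j = 0 by rewrite H mxE.
rewrite mxE => /eqP; rewrite psumr_eq0 => [/allP Hk|k _]; last first.
  by rewrite adjE -normCKC exprn_ge0.
have := Hk i (mem_index_enum i); rewrite /= adjE -normCKC sqrf_eq0 normr_eq0.
by move/eqP => ->; rewrite mxE.
Qed.


Lemma form_diag p q (Q : 'M[C]_(p, q)) (t : 'rV[C]_p) (v : 'cV[C]_q) :
  (adj v *m (adj Q *m diag_mx t *m Q) *m v) 0 0
    = \sum_i t 0 i * `|(Q *m v) i 0| ^+ 2.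
Proof.
rewrite !mulmxA -adjM -mulmxA mxE; apply: eq_bigr => i _.
rewrite mul_mx_diag !mxE normCKC.
by rewrite mulrCA mulrA.
Qed.

Lemma nneg_real n (t : 'rV[C]_n) : (forall i, 0 <= t 0 i) -> realrow t.
Proof. by move=> H i; apply: ger0_real. Qed.

Lemma psd_conj_diag p q (Q : 'M[C]_(p, q)) (t : 'rV[C]_p) :
  (forall i, 0 <= t 0 i) -> psdmx (adj Q *m diag_mx t *m Q).
Proof.
move=> t0; split.
  by rewrite !adjM adjK adj_diag ?mulmxA //; apply: nneg_real.
move=> v; rewrite form_diag sumr_ge0 // => i _.
by rewrite mulr_ge0 ?exprn_ge0.
Qed.

Lemma psd_adj_mul p q (M : 'M[C]_(p, q)) : psdmx (adj M *m M).
Proof.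
split; first by rewrite adjM adjK.
move=> v; have -> : adj v *m (adj M *m M) *m v = adj (M *m v) *m (M *m v).
  by rewrite adjM !mulmxA.
exact: nrm2_ge0.
Qed.

Lemma psd_spectral p (H : 'M[C]_p) : psdmx H ->
  let P := spectralmx H in let d := spectral_diag H in
  H = adj P *m diag_mx d *m P /\ forall i, 0 <= d 0 i.
Proof.
move=> [Hh Hpos] P d.
have Hn : H \is normalmx.
  by apply/normalmxP; rewrite -[(H ^t*)%sesqui]/(adj H) Hh.
have HE : H = adj P *m diag_mx d *m P.
  by rewrite {1}(orthomx_spectralP Hn) invmx_unitary ?spectral_unitarymx.
split => // i.
have := Hpos (adj P *m delta_mx i 0); rewrite HE form_diag.
have PU : P *m adj P = 1%:M by apply: unitary_adjmul; apply: spectral_unitarymx.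
rewrite mulmxA PU mul1mx (bigD1 i) //= big1 ?addr0.
  by rewrite mxE !eqxx /= normr1 expr1n mulr1.
by move=> k /negbTE ki; rewrite mxE ki /= normr0 expr0n /= mulr0.
Qed.

Lemma sqrtmx_spec p (H : 'M[C]_p) : psdmx H ->
  psdmx (sqrtmx H) /\ sqrtmx H *m sqrtmx H = H.
Proof.
move=> Hpsd; have [HE d0] := psd_spectral Hpsd.
set P := spectralmx H in HE *; set d := spectral_diag H in HE d0 *.
have PU : P *m adj P = 1%:M by apply: unitary_adjmul; apply: spectral_unitarymx.
have -> : sqrtmx H = adj P *m diag_mx (map_mx sqrtC d) *m P.
  by rewrite /sqrtmx invmx_unitary ?spectral_unitarymx.
split.
  by apply: psd_conj_diag => i; rewrite mxE sqrtC_ge0.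
rewrite [RHS]HE -!mulmxA; congr (_ *m _); rewrite !mulmxA -[_ *m P *m adj P]mulmxA PU mulmx1.
rewrite mulmx_diag; congr (_ *m _); congr diag_mx; apply/rowP => j.
by rewrite !mxE -expr2 sqrtCK.
Qed.

Lemma psd_form_ge0 p (S : 'M[C]_p) (v : 'cV[C]_p) : psdmx S -> 0 <= (adj v *m S *m v) 0 0.
Proof. by case=> _ ->. Qed.

Lemma mx_eq_cols p q (A B : 'M[C]_(p, q)) :
  (forall j, A *m (delta_mx j 0 : 'cV_q) = B *m (delta_mx j 0 : 'cV_q)) -> A = B.
Proof.
move=> H; apply/matrixP => i j; have := H j; rewrite -!colE => /matrixP /(_ i 0).
by rewrite !mxE.
Qed.

Lemma psd_sqrt_unique p (S T : 'M[C]_p) : psdmx S -> psdmx T ->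
  S *m S = T *m T -> S = T.
Proof.
move=> Spsd Tpsd STeq.
have [TE t0] := psd_spectral Tpsd.
set Q := spectralmx T in TE *; set t := spectral_diag T in TE t0 *.
have QU : Q *m adj Q = 1%:M by apply: unitary_adjmul; apply: spectral_unitarymx.
have QU' : adj Q *m Q = 1%:M by apply: unitary_muladj; apply: spectral_unitarymx.
suff : S *m adj Q = T *m adj Q.
  by move/(congr1 (mulmx^~ Q)); rewrite -!mulmxA QU' !mulmx1.
apply: mx_eq_cols => j; rewrite -!mulmxA; set v := adj Q *m delta_mx j 0.
have Tv : T *m v = t 0 j *: v.
  rewrite TE /v !mulmxA -[_ *m Q *m adj Q]mulmxA QU mulmx1 -mulmxA.
  rewrite scalemxAr; congr (_ *m _); apply/matrixP => a b.
  by rewrite mul_diag_mx !mxE; case: eqP => [->|]; rewrite ?mulr1 ?mulr0.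
rewrite Tv; apply/eqP; rewrite -subr_eq0; apply/eqP.
set w := S *m v - t 0 j *: v.
have Sw : S *m w + t 0 j *: w = 0.
  rewrite /w mulmxBr !scalerBr -scalemxAr !mulmxA STeq -!mulmxA Tv.
  have TtV : T *m (t 0 j *: v) = t 0 j *: (t 0 j *: v) by rewrite -scalemxAr Tv.
  by rewrite TtV addrA subrK subrr.
have Hsum : (adj w *m S *m w) 0 0 + t 0 j * nrm2 w = 0.
  have E : (adj w *m (S *m w + t 0 j *: w)) 0 0 = 0 by rewrite Sw mulmx0 mxE.
  rewrite -E mulmxDr -scalemxAr mulmxA scalemxAr.
  by rewrite [RHS]mxE -scalemxAr; congr (_ + _); rewrite mxE.
move/eqP: Hsum; rewrite paddr_eq0 ?psd_form_ge0 ?mulr_ge0 ?nrm2_ge0 //.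
case/andP => _; rewrite mulf_eq0 => /orP [/eqP tj0|/eqP /nrm2_eq0 //].
have Sw0 : S *m w = 0 by move: Sw; rewrite tj0 scale0r addr0.
have wE : w = S *m v by rewrite /w tj0 scale0r subr0.
apply: nrm2_eq0; rewrite /nrm2 {1}wE adjM.
case: Spsd => Sh _; by rewrite Sh -mulmxA Sw0 mulmx0 mxE.
Qed.

Definition rsq n (s : 'rV[C]_n) : 'rV[C]_n := \row_i (s 0 i * s 0 i).
Definition rinv n (s : 'rV[C]_n) : 'rV[C]_n := \row_i (s 0 i)^-1.

Lemma trnorm_key p q (Z : 'M[C]_(p, q)) (Q : 'M[C]_q) (s : 'rV[C]_q) :
  Q *m adj Q = 1%:M -> adj Q *m Q = 1%:M -> (forall i, 0 <= s 0 i) ->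
  adj Z *m Z = adj Q *m diag_mx (rsq s) *m Q ->
  \tr (sqrtmx (Z *m adj Z)) = \sum_i s 0 i.
Proof.
move=> QU QU' s0 ZZ.
pose F := Z *m adj Q.
pose S := F *m diag_mx (rinv s) *m adj F.
have FF : adj F *m F = diag_mx (rsq s).
  rewrite /F adjM adjK -mulmxA [adj Z *m _]mulmxA ZZ.
  by rewrite !mulmxA QU mul1mx -mulmxA QU mulmx1.
have Spsd : psdmx S.
  rewrite /S -[F in F *m _ *m _]adjK; apply: psd_conj_diag => i.
  by rewrite mxE invr_ge0.
pose e := \row_i (s 0 i != 0)%:R : 'rV[C]_q.
have Fe : F *m diag_mx e = F.
  pose G := F - F *m diag_mx e.
  suff : G = 0 by move/eqP; rewrite subr_eq0 => /eqP.
  apply: mx_adj_eq0.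
  have -> : G = F *m diag_mx (\row_i (s 0 i == 0)%:R).
    rewrite /G -{1}[F]mulmx1 -mulmxBr; congr (_ *m _).
    apply/matrixP => i j; rewrite !mxE; case: eqP => [->|_];
      rewrite ?mulr1n ?mulr0n ?subrr //.
    by case: eqP => _ /=; rewrite ?subr0 ?subrr.
  rewrite adjM adj_diag; last by move=> i; rewrite mxE; case: eqP; rewrite ?real0 ?real1.
  rewrite -mulmxA [adj F *m _]mulmxA FF !mulmx_diag.
  apply/matrixP => i j; rewrite !mxE; case: eqP => [->|_];
  by rewrite ?mul0r ?mulr0 ?mul0rn ?mulr0n.
have ZZpsd : psdmx (Z *m adj Z).
  by have := psd_adj_mul (adj Z); rewrite adjK.
have SS : S *m S = Z *m adj Z.
  have -> : S *m S = F *m (diag_mx (rinv s) *m (adj F *m F) *m diag_mx (rinv s)) *m adj F.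
    by rewrite /S !mulmxA.
  rewrite FF !mulmx_diag.
  have -> : \row_j ((\row_j0 (rinv s 0 j0 * rsq s 0 j0)) 0 j * rinv s 0 j) = e.
    apply/rowP => j; rewrite !mxE; case: eqP => [->|/eqP sj]; first by rewrite invr0 !mul0r.
    by rewrite /= mulrA mulVf // mul1r mulfV.
  by rewrite Fe /F adjM adjK mulmxA -[Z *m _ *m _]mulmxA QU' mulmx1.
have -> : sqrtmx (Z *m adj Z) = S.
  have [sp sq] := sqrtmx_spec ZZpsd.
  by apply: psd_sqrt_unique => //; rewrite sq SS.
rewrite /S mxtrace_mulC mulmxA FF mulmx_diag mxtrace_diag; apply: eq_bigr => i _.
rewrite !mxE; have [->|si] := eqVneq (s 0 i) 0; first by rewrite !mul0r.
by rewrite mulfK.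
Qed.

Lemma adj_tr p q (A : 'M[C]_(p, q)) : adj (A^T) = (adj A)^T.
Proof. by apply/matrixP => i j; rewrite !mxE. Qed.

Lemma cs1 p (u v : 'cV[C]_p) : nrm2 u = 1 -> nrm2 v = 1 ->
  `|(adj u *m v) 0 0| <= 1.
Proof.
move=> nu nv; set c := (adj v *m u) 0 0.
have cc : (adj u *m v) 0 0 = c^*.
  rewrite /c !mxE rmorph_sum; apply: eq_bigr => k _.
  by rewrite !adjE rmorphM /= conjCK mulrC.
have := nrm2_ge0 (u - c *: v).
have -> : nrm2 (u - c *: v) = 1 - `|c| ^+ 2.
  have adjZ : adj (c *: v) = c^* *: adj v.
    by apply/matrixP => i j; rewrite !mxE rmorphM.
  rewrite /nrm2 adjB adjZ mulmxBl !mulmxBr -!scalemxAl -!scalemxAr.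
  set uu := adj u *m u; set uv := adj u *m v; set vu := adj v *m u; set vv := adj v *m v.
  have -> : uu = 1%:M by apply/matrixP => i j; rewrite !ord1 /uu -/(nrm2 u) nu mxE.
  have -> : vv = 1%:M by apply/matrixP => i j; rewrite !ord1 /vv -/(nrm2 v) nv mxE.
  have -> : uv = (c^*)%:M by apply/matrixP => i j; by rewrite !ord1 /uv cc [RHS]mxE mulr1n.
  have -> : vu = c%:M by apply/matrixP => i j; by rewrite !ord1 /vu [RHS]mxE mulr1n.
  by rewrite !mxE /= !mulr1n normCK mulr1 subrr subr0.
rewrite cc norm_conjC subr_ge0 => h.
by rewrite -(@expr_le1 _ 2).
Qed.

Section Quantum.
Variables m n : nat.

Definition mxof (psi : 'cV[C]_(m * n)) : 'M[C]_(m, n) :=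
  \matrix_(a, b) psi (mxtens_index (a, b)) 0.

Lemma sum_tens (F : 'I_(m * n) -> C) :
  \sum_k F k = \sum_a \sum_b F (mxtens_index (a, b)).
Proof.
rewrite (reindex (@mxtens_index m n)) /=; last first.
  by exists (@mxtens_unindex m n) => x _; [exact: mxtens_indexK | exact: mxtens_unindexK].
by rewrite pair_big /=; apply: eq_bigr => -[a b].
Qed.

Lemma ketbraE p (u v : 'cV[C]_p) i j : ketbra u v i j = u i 0 * (v j 0)^*.
Proof. by rewrite /ketbra mxE big_ord1 adjE. Qed.

Lemma ptB (psi : 'cV[C]_(m * n)) :
  ptraceB (ketbra psi psi) = mxof psi *m adj (mxof psi).
Proof.
apply/matrixP => a a'; rewrite !mxE; apply: eq_bigr => b _.
by rewrite ketbraE adjE !mxE.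
Qed.

Lemma ptA (phi psi : 'cV[C]_(m * n)) :
  ptraceA (ketbra phi psi) = (adj (mxof psi) *m mxof phi)^T.
Proof.
apply/matrixP => b b'; rewrite !mxE; apply: eq_bigr => a _.
by rewrite ketbraE adjE !mxE mulrC.
Qed.

Lemma braketE (phi psi : 'cV[C]_(m * n)) (R : 'M[C]_n) :
  braket phi (tensmx (1%:M : 'M[C]_m) R) psi
    = \tr (R *m adj (ptraceA (ketbra phi psi))).
Proof.
rewrite /braket mxE sum_tens.
have -> : \tr (R *m adj (ptraceA (ketbra phi psi))) =
  \sum_a \sum_b \sum_b' (phi (mxtens_index (a, b)) 0)^* * R b b' *
      psi (mxtens_index (a, b')) 0.
  rewrite /mxtrace exchange_big; apply: eq_bigr => b _.
  rewrite mxE (eq_bigr (fun j => R b j * (ptraceA (ketbra phi psi) b j)^*)); last by move=> j _; rewrite adjE.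
  under eq_bigr do rewrite mxE rmorph_sum mulr_sumr.
  rewrite exchange_big; apply: eq_bigr => a _; apply: eq_bigr => b' _.
  by rewrite ketbraE rmorphM /= conjCK mulrCA mulrA.
apply: eq_bigr => a _; rewrite exchange_big; apply: eq_bigr => b' _.
rewrite -mulr_suml; congr (_ * _).
rewrite mxE sum_tens (bigD1 a) //= [X in _ + X]big1 ?addr0; last first.
  move=> a' /negbTE aa'; apply: big1 => b _.
  by rewrite tensmxE [1%:M _ _]mxE aa' mulr0n mul0r mulr0.
by apply: eq_bigr => b _; rewrite adjE tensmxE mxE eqxx mulr1n mul1r.
Qed.

Lemma pure_nrm (psi : 'cV[C]_(m * n)) : pure_state psi -> nrm2 psi = 1.
Proof. by rewrite /pure_state /nrm2 => ->; rewrite mxE. Qed.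

End Quantum.

Lemma colnorm p q (M : 'M[C]_(p, q)) i : (adj M *m M) i i = \sum_k `|M k i| ^+ 2.
Proof. by rewrite mxE; apply: eq_bigr => k _; rewrite adjE normCKC. Qed.

Lemma sq_le_sum p (M : 'M[C]_p) i k : `|M k i| ^+ 2 <= (adj M *m M) i i.
Proof.
rewrite colnorm (bigD1 k) //= lerDl; apply: sumr_ge0 => j _; exact: exprn_ge0.
Qed.

Lemma sq_le1 (x : C) : 0 <= x -> x ^+ 2 <= x -> x <= 1.
Proof.
move=> x0; have [->|xn0] := eqVneq x 0; first by rewrite ler01.
have xp : 0 < x by rewrite lt_def xn0.
by move=> h; rewrite -(ler_pM2l xp) mulr1 -expr2.
Qed.

Lemma tens11 m n : tensmx (1%:M : 'M[C]_m) (1%:M : 'M[C]_n) = 1%:M.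
Proof.
apply/matrixP => i j.
case: (mxtens_indexP i) => a b; case: (mxtens_indexP j) => c d.
rewrite tensmxE !mxE (can_eq (@mxtens_indexK m n)) xpair_eqE.
by case: (a == c); case: (b == d); rewrite ?mulr1n ?mulr0n ?mulr1 ?mulr0.
Qed.

End Helpers.

Theorem mainTheorem1 (C : numClosedFieldType) (m n : nat)
  (psi phi : 'cV[C]_(m * n)) (eta : C) (U V : 'M[C]_n) (s : 'rV[C]_n) :
  pure_state psi -> pure_state phi -> 0 <= eta ->
  is_svd (ptraceA (ketbra phi psi)) U V s ->
  let W := sgn_svd eta U V s in
  let rhoA := ptraceB (ketbra psi psi) in
  let sigmaA := ptraceB (ketbra phi phi) in
  [/\ partial_isometry W,
      fidelity rhoA sigmaA - 2%:R * eta * n%:R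
        <= `| braket phi (tensmx (1%:M : 'M[C]_m) W) psi | ^+ 2
    & forall R : 'M[C]_n, partial_isometry R ->
        fidelity rhoA sigmaA = `| braket phi (tensmx (1%:M : 'M[C]_m) R) psi | ^+ 2 ->
        loewner_le (adj W *m W) (adj R *m R)].
Proof.
move=> psiP phiP eta0 [UU [VU [s0 KE]]] W rhoA sigmaA.
set K := ptraceA (ketbra phi psi) in KE.
have UaU : adj U *m U = 1%:M by apply: unitary_muladj.
have UUa : U *m adj U = 1%:M by apply: unitary_adjmul.
have VaV : adj V *m V = 1%:M by apply: unitary_muladj.
have VVa : V *m adj V = 1%:M by apply: unitary_adjmul.
have sr : realrow s by apply: nneg_real.
have adjKE : adj K = V *m diag_mx s *m adj U.
  by rewrite KE !adjM adjK adj_diag // mulmxA.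
have trE : forall R : 'M[C]_n, braket phi (tensmx (1%:M : 'M[C]_m) R) psi
    = \tr (adj U *m R *m V *m diag_mx s).
  move=> R; rewrite braketE -/K adjKE !mulmxA mxtrace_mulC !mulmxA.
  done.
set a := \sum_i s 0 i.
have a0 : 0 <= a by apply: sumr_ge0 => i _.
have Fa : fidelity rhoA sigmaA = a ^+ 2.
  rewrite /fidelity /trnorm /rhoA /sigmaA !ptB.
  set X := mxof psi; set Y := mxof phi.
  have Xpsd : psdmx (X *m adj X) by have := psd_adj_mul (adj X); rewrite adjK.
  have Ypsd : psdmx (Y *m adj Y) by have := psd_adj_mul (adj Y); rewrite adjK.
  have [[rh _] rsq] := sqrtmx_spec Xpsd.
  have [[sh _] ssq] := sqrtmx_spec Ypsd.
  set sqr := sqrtmx (X *m adj X) in rh rsq *.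
  set ss := sqrtmx (Y *m adj Y) in sh ssq *.
  clearbody sqr ss.
  have E1 : adj (sqr *m ss) *m (sqr *m ss) = (ss *m X) *m adj (ss *m X).
    rewrite [adj (sqr *m ss)]adjM [adj (ss *m X)]adjM rh sh !mulmxA -(mulmxA ss sqr sqr) rsq.
    by rewrite !mulmxA.
  rewrite E1 (@trnorm_key _ _ _ _ (V^T) s) //.
  - by rewrite adj_tr -trmx_mul VaV trmx1.
  - by rewrite adj_tr -trmx_mul VVa trmx1.
  have NE : adj X *m Y = (adj (V^T)) *m diag_mx s *m U^T.
    rewrite -[adj X *m Y]trmxK -ptA -/K KE !trmx_mul tr_diag_mx adj_tr mulmxA.
    done.
  have -> : adj (ss *m X) *m (ss *m X) = (adj X *m Y) *m adj (adj X *m Y).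
    by rewrite !adjM adjK sh -!mulmxA [ss *m (ss *m _)]mulmxA ssq !mulmxA.
  rewrite NE !adjM adjK adj_diag // adj_tr.
  rewrite !adj_tr -!mulmxA (mulmxA (U^T)) -trmx_mul UaU trmx1 mul1mx.
  by rewrite (mulmxA (diag_mx s)) mulmx_diag /rsq !mulmxA.
set gv := \row_i (if eta < s 0 i then 1 else 0) : 'rV[C]_n.
have gbool : forall i, gv 0 i = 0 \/ gv 0 i = 1.
  by move=> i; rewrite mxE; case: ifP; [right|left].
have gr : realrow gv by move=> i; case: (gbool i) => ->; rewrite ?real0 ?real1.
have gg : diag_mx gv *m diag_mx gv = diag_mx gv.
  rewrite mulmx_diag; congr diag_mx; apply/rowP => i; rewrite mxE.
  by case: (gbool i) => ->; rewrite ?mulr0 ?mulr1.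
have WE : W = U *m diag_mx gv *m adj V by [].
have adjW : adj W = V *m diag_mx gv *m adj U.
  by rewrite WE !adjM adjK adj_diag // mulmxA.
split.
-
  exists (V *m diag_mx gv *m adj V), (U *m adj V); split; [split|split].
  + by rewrite !adjM adjK adj_diag // mulmxA.
  + rewrite !mulmxA -(mulmxA (V *m diag_mx gv) (adj V) V) VaV mulmx1.
    by rewrite -(mulmxA V) gg.
  + by rewrite /Defs.isometry adjM adjK -mulmxA (mulmxA (adj U)) UaU mul1mx VVa.
  + by rewrite WE !mulmxA -(mulmxA U (adj V) V) VaV mulmx1.
-
  set a1 := \sum_i gv 0 i * s 0 i.
  have tW : braket phi (tensmx (1%:M : 'M[C]_m) W) psi = a1.
    rewrite trE WE !mulmxA UaU mul1mx -(mulmxA (diag_mx gv) (adj V) V) VaV mulmx1.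
    by rewrite mulmx_diag mxtrace_diag; apply: eq_bigr => i _; rewrite mxE.
  have ta : braket phi (tensmx (1%:M : 'M[C]_m) (U *m adj V)) psi = a.
    rewrite trE !mulmxA UaU mul1mx VaV mul1mx.
    by rewrite mxtrace_diag.
  have a1le : a <= 1.
    rewrite -(ger0_norm a0) -ta /braket -mulmxA; apply: cs1; first exact: pure_nrm.
    set M := tensmx (1%:M : 'M[C]_m) (U *m adj V).
    have MM : adj M *m M = 1%:M.
      by rewrite /M adj_tens tensmx_mul adj1 mul1mx adjM adjK -mulmxA
        (mulmxA (adj U)) UaU mul1mx VVa tens11.
    rewrite /nrm2 adjM -mulmxA (mulmxA (adj M)) MM mul1mx.
    exact: pure_nrm.
  set b := \sum_i (1 - gv 0 i) * s 0 i.
  have aE : a = a1 + b.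
    rewrite /a /a1 /b -big_split; apply: eq_bigr => i _ /=.
    by rewrite -mulrDl addrC subrK mul1r.
  have a10 : 0 <= a1.
    by apply: sumr_ge0 => i _; apply: mulr_ge0 => //; case: (gbool i) => ->.
  have b0 : 0 <= b.
    by apply: sumr_ge0 => i _; apply: mulr_ge0 => //; case: (gbool i) => ->;
      rewrite ?subr0 ?subrr.
  have bn : b <= eta * n%:R.
    have -> : eta * n%:R = \sum_(i < n) eta by rewrite sumr_const card_ord mulr_natr.
    apply: ler_sum => i _; rewrite mxE.
    case: ifP => [_|]; first by rewrite subrr mul0r.
    rewrite subr0 mul1r real_ltNge ?ger0_real //.
    by move/negbFE.
  clearbody a a1 b.
  rewrite Fa tW ger0_norm // lerBlDr.
  have -> : a ^+ 2 = a1 ^+ 2 + b * (a + a1) by rewrite aE; ring.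
  rewrite lerD2l.
  apply: (@le_trans _ _ (b * 2%:R)).
    apply: ler_wpM2l => //.
    apply: (@le_trans _ _ (1 + 1)); last by rewrite -natr1 ?add1n.
    by apply: lerD => //; apply: (le_trans _ a1le); rewrite aE lerDl.
  apply: (@le_trans _ _ (eta * n%:R * 2%:R)).
    by apply: ler_wpM2r.
  by rewrite mulrC mulrA.
move=> R [Pi [Ut [[Pih PiPi] [UtI RE]]]].
rewrite Fa trE.
set R' := adj U *m R *m V.
set P' := adj V *m Pi *m V.
have RR0 : adj R *m R = Pi.
  by rewrite RE adjM Pih -mulmxA (mulmxA (adj Ut)) UtI mul1mx PiPi.
have RR : adj R' *m R' = P'.
  rewrite /R' /P' !adjM adjK !mulmxA -(mulmxA (adj V *m adj R) U (adj U)) UUa mulmx1.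
  by rewrite -RR0 !mulmxA.
have P'h : adj P' = P' by rewrite /P' !adjM adjK Pih mulmxA.
have P'P' : adj P' *m P' = P'.
  rewrite P'h /P' !mulmxA -(mulmxA (adj V *m Pi) V (adj V)) VVa mulmx1.
  by rewrite -(mulmxA (adj V) Pi Pi) PiPi.
have Pge0 : forall i, 0 <= P' i i.
  by move=> i; rewrite -P'P' colnorm; apply: sumr_ge0 => k _; exact: exprn_ge0.
have Ple1 : forall i, P' i i <= 1.
  move=> i; apply: sq_le1 => //; rewrite -(ger0_norm (Pge0 i)).
  by rewrite [X in _ <= X]ger0_norm // -{2}P'P' sq_le_sum.
have Rle1 : forall i, `|R' i i| <= 1.
  move=> i; rewrite -(@expr_le1 _ 2) //; apply: le_trans (Ple1 i).
  by rewrite -RR sq_le_sum.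
have trR : \tr (R' *m diag_mx s) = \sum_i R' i i * s 0 i.
  by rewrite mul_mx_diag /mxtrace; apply: eq_bigr => i _; rewrite mxE.
rewrite -/R' trR.
move/eqP; rewrite eqrXn2 // => /eqP aEq.
set c := \sum_i `|R' i i| * s 0 i.
have ac : a <= c.
  rewrite aEq /c; apply: le_trans (ler_norm_sum _ _ _) _.
  by apply: ler_sum => i _; rewrite normrM (ger0_norm (s0 i)).
have ca : c <= a.
  by apply: ler_sum => i _; rewrite ler_piMl.
have terms : forall i, (1 - `|R' i i|) * s 0 i = 0.
  have : \sum_i (1 - `|R' i i|) * s 0 i == 0.
    rewrite (eq_bigr (fun i => s 0 i - `|R' i i| * s 0 i)); last first.
      by move=> i _; rewrite mulrBl mul1r.
    by rewrite sumrB -/a -/c subr_eq0 eq_le ac ca.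
  rewrite psumr_eq0 => [/allP H i|i _]; last by rewrite mulr_ge0 // subr_ge0.
  by apply/eqP; exact: (H i (mem_index_enum i)).
have Pdiag : forall i, gv 0 i = 1 -> P' i i = 1.
  move=> i; rewrite mxE; case: ifP => [lt _|_ /eqP]; last by rewrite eq_sym oner_eq0.
  have si : s 0 i != 0 by rewrite gt_eqF // (le_lt_trans eta0 lt).
  have := terms i.
  move/eqP; rewrite mulf_eq0 (negbTE si) orbF subr_eq0 => /eqP R1.
  apply/eqP; rewrite eq_le Ple1 /=.
  by rewrite -(expr1n _ 2) R1 -RR sq_le_sum.
have PiE : Pi = V *m P' *m adj V.
  by rewrite /P' !mulmxA VVa mul1mx -mulmxA VVa mulmx1.
clearbody P'.
have PP : P' *m P' = P' by rewrite -{1}P'h P'P'.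
have offd : forall i k, gv 0 i = 1 -> k != i -> P' k i = 0.
  move=> i0 k gi ki; have := Pdiag i0 gi; rewrite -{1}P'P' colnorm (bigD1 i0) //=.
  rewrite (Pdiag i0 gi) normr1 expr1n => /eqP; rewrite -subr_eq0 addrAC subrr add0r.
  rewrite psumr_eq0 => [/allP H|j _]; last exact: exprn_ge0.
  have := H k (mem_index_enum k); rewrite /= ki /= sqrf_eq0 normr_eq0.
  by move/eqP.
have Pg : P' *m diag_mx gv = diag_mx gv.
  apply/matrixP => k j; rewrite mul_mx_diag [LHS]mxE [RHS]mxE.
  have [<-|kj] := eqVneq k j.
    rewrite mulr1n; case: (gbool k) => gk; rewrite gk ?mulr0 // mulr1.
    exact: Pdiag.
  rewrite mulr0n; case: (gbool j) => gj; rewrite gj ?mulr0 // mulr1.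
  exact: offd.
have gP : diag_mx gv *m P' = diag_mx gv.
  by have := congr1 adj Pg; rewrite adjM adj_diag // P'h.
rewrite /loewner_le.
have -> : adj R *m R - adj W *m W =
    adj ((P' - diag_mx gv) *m adj V) *m ((P' - diag_mx gv) *m adj V).
  rewrite adjM adjK adjB P'h adj_diag //.
  rewrite -mulmxA (mulmxA (P' - diag_mx gv)).
  have -> : (P' - diag_mx gv) *m (P' - diag_mx gv) = P' - diag_mx gv.
    by rewrite mulmxBl !mulmxBr PP Pg gP gg subrr subr0.
  rewrite RR0 PiE adjW WE.
  rewrite !mulmxA -(mulmxA (V *m diag_mx gv) (adj U) U) UaU mulmx1.
  rewrite -(mulmxA V (diag_mx gv) (diag_mx gv)) gg.
  by rewrite mulmxBr mulmxBl.
exact: psd_adj_mul.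
Qed.
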